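(* Let $n\ge 8$ and let $T=(l_1,\dots,l_n)$, $l_1\le\cdots\le l_n$, be an impossibly burnable $n$-path forest of order $m^2$ with $l_1=M_n$. Then $B_m(l_i)\in\{3,4\}$ for every $i\in[n]$. Moreover, in this situation $l_1$ is odd (equivalently $B_m(l_1)=3$).
   Context: A path forest is a disjoint union of paths; an $n$-path forest is represented by the tuple $(l_1,\dots,l_n)$ of its path orders, with total order $\sum_i l_i=m^2$. For $m\in\mathbb{N}$ and an integer $1\le l\le m^2$, let $B_m(l)$ be the least positive integer $t$ with $t\equiv l\pmod 2$ such that $l\le 2mt-t^2$. An $n$-path forest of order $m^2$ is impossibly burnable if $\sum_{i=1}^n B_m(l_i)>m$. For $n\ge2$, $M_n$ denotes the maximum of $l_1$ over all impossibly burnable $n$-path forests. *)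

(* Defs.v *)
From mathcomp Require Import all_boot.
Set Implicit Arguments. Unset Strict Implicit. Unset Printing Implicit Defensive.

(* The defining condition for B_m(l): t positive, t = l (mod 2), l <= 2mt - t^2
   (stated without truncated subtraction as l + t^2 <= 2mt). *)
Definition B_cond (m l t : nat) : bool :=
  [&& 0 < t, odd t == odd l & l + t * t <= 2 * m * t].

(* For 1 <= l <= m^2 such a t
   always exists with t <= m+1, so searching 1..2m+2 in increasing order and
   taking the first hit yields exactly the least such t. *)
Definition B (m l : nat) : nat :=
  nth 0 [seq t <- iota 1 (2 * m + 2) | B_cond m l t] 0.

(* An n-path forest of order m^2, given by the list of its path orders. *)
Definition path_forest (n m : nat) (s : seq nat) : Prop :=
  [/\ size s = n, all (fun x => 0 < x) s & sumn s = m ^ 2].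

Definition impossibly_burnable (m : nat) (s : seq nat) : Prop :=
  m < sumn (map (B m) s).

(* The forest written with l_1 <= ... <= l_n; l_1 is nth 0 s 0. *)
Definition sorted_forest (n m : nat) (s : seq nat) : Prop :=
  path_forest n m s /\ sorted leq s.

(* "v = M_n": v is the maximum of l_1 over all impossibly burnable n-path
   forests (of order m^2, for any m). *)
Definition is_M (n v : nat) : Prop :=
  (exists m s, [/\ sorted_forest n m s, impossibly_burnable m s & nth 0 s 0 = v])
  /\ (forall m s, sorted_forest n m s -> impossibly_burnable m s -> nth 0 s 0 <= v).

(* Main.v *)
Require Import Defs.
From Stdlib Require Import ZArith Lia.
From mathcomp Require Import all_boot zify.
Set Implicit Arguments. Unset Strict Implicit. Unset Printing Implicit Defensive.

Lemma first_filter (P : pred nat) k a :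
  (exists x, a <= x < a + k /\ P x) ->
  [/\ a <= nth 0 [seq t <- iota a k | P t] 0 < a + k, P (nth 0 [seq t <- iota a k | P t] 0)
   & forall y, a <= y < nth 0 [seq t <- iota a k | P t] 0 -> ~~ P y].
Proof.
elim: k a => [|k IH] a [x [Hx Px]]; first by lia.
have -> : iota a k.+1 = a :: iota a.+1 k by [].
rewrite /=; case: ifP => Pa /=.
  split => //; [lia| move=> y; lia].
have ex : exists x, a.+1 <= x < a.+1 + k /\ P x.
  exists x; split => //; case: (boolP (x == a)) => [/eqP Ex|Hne]; first by rewrite Ex Pa in Px.
  move/eqP: Hne; lia.
have [H1 H2 H3] := IH a.+1 ex.
split => //; first lia.
move=> y Hy; case: (boolP (y == a)) => [/eqP ->|Hne]; first by rewrite Pa.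
apply: H3; move/eqP: Hne; lia.
Qed.

Lemma B_spec m l : 0 < m -> 0 < l <= m ^ 2 ->
  [/\ B_cond m l (B m l), B m l <= m &
      forall y, 0 < y < B m l -> ~~ B_cond m l y].
Proof.
move=> Hm /andP [Hl0 Hl].
have [x0 [Hx0 Hx0m]] : exists x0, B_cond m l x0 /\ 0 < x0 <= m.
  case: (boolP (odd m == odd l)) => Hp.
    exists m; split; last lia.
    apply/and3P; split => //; lia.
  have Hm2 : 1 < m.
    case: m Hm Hl Hp => [|[|m]] //= _; lia.
  have Hne : l != m ^ 2.
    apply/eqP => E; move: Hp; by rewrite E oddX eqxx.
  exists m.-1; split; last lia.
  apply/and3P; split; first lia.
    case: m Hm Hm2 Hp {Hne Hl} => // m _ _ /= Hp.
    by move: Hp; case: (odd m); case: (odd l).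
  have Hl' : l < m ^ 2 by rewrite ltn_neqAle Hne Hl.
  case: m Hm Hm2 Hl Hl' {Hp Hne} => // m _ _ /=; nia.
have := @first_filter (B_cond m l) (2 * m + 2) 1.
case.
  exists x0; split => //; lia.
rewrite -/(B m l) => H1 H2 H3.
split => //.
case: (leqP (B m l) x0) => H; first lia.
have := H3 x0; rewrite Hx0; lia.
Qed.

Lemma even_gap x y : y < x -> ~~ odd x -> ~~ odd y -> y + 2 <= x.
Proof.
move=> H ox oy; case: (ltngtP (y + 2) x) => // H2.
have E : x = y.+1 by lia.
by move: ox; rewrite E /= oy.
Qed.

Lemma B_props m l : 0 < m -> 0 < l <= m ^ 2 ->
  [/\ 0 < B m l, odd (B m l) = odd l, l + B m l * B m l <= 2 * m * B m l,
      B m l <= m &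
      (3 <= B m l -> 2 * m * (B m l - 2) + 2 <= l + (B m l - 2) * (B m l - 2))].
Proof.
move=> Hm Hl; have [/and3P [H0 /eqP Hp Hi] Hle Hmin] := B_spec Hm Hl.
split => // H3.
set t := B m l in H0 Hp Hi Hle Hmin H3 *.
have := Hmin (t - 2); rewrite /B_cond.
have Hpar : odd (t - 2) = odd l.
  rewrite -Hp; have -> : t = (t - 2) + 2 by lia.
  by rewrite addnK oddD addbF.
rewrite Hpar eqxx /= => /(_ ltac:(lia)).
have -> : (0 < t - 2) = true by lia.
rewrite /= -ltnNge => Hlt.
apply: even_gap => //.
  rewrite oddD oddM Hpar andbb; by case: (odd l).
by rewrite !oddM.
Qed.

Definition cA m (s : seq nat) := count (fun x => B m x <= 3) s.
Definition cB m (s : seq nat) := count (fun x => 4 <= B m x) s.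
Definition dS m (s : seq nat) := sumn [seq 3 - B m x | x <- s & B m x <= 3].
Definition eS m (s : seq nat) := sumn [seq B m x - 4 | x <- s & 4 <= B m x].

Lemma elem_big m x : 0 < m -> 0 < x <= m ^ 2 -> 4 <= B m x ->
  let e := B m x - 4 in
  [/\ 4 * m + 2 * m * e <= x + 2 + 4 * e + e * e, m * e <= x & e <= m].
Proof.
move=> Hm Hx H4 e.
have [H0 Hp Hi Hle H3] := B_props Hm Hx.
have := H3 ltac:(lia).
have -> : B m x = e + 4 by rewrite /e; lia.
move=> H; split; [nia | nia | lia].
Qed.

Lemma cA_cons m x s : cA m (x :: s) = (B m x <= 3) + cA m s. Proof. by []. Qed.
Lemma cB_cons m x s : cB m (x :: s) = (4 <= B m x) + cB m s. Proof. by []. Qed.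
Lemma dS_cons m x s : dS m (x :: s) = (if B m x <= 3 then 3 - B m x else 0) + dS m s.
Proof. by rewrite /dS /=; case: ifP. Qed.
Lemma eS_cons m x s : eS m (x :: s) = (if 4 <= B m x then B m x - 4 else 0) + eS m s.
Proof. by rewrite /eS /=; case: ifP. Qed.

Lemma agg m L s : 0 < m -> all (fun x => (L <= x) && (0 < x) && (x <= m ^ 2)) s ->
 [/\ cA m s + cB m s = size s,
     sumn (map (B m) s) + dS m s = 3 * cA m s + 4 * cB m s + eS m s,
     exists sq, sq <= eS m s * eS m s /\
        cA m s * L + cB m s * (4 * m) + 2 * m * eS m s <= sumn s + 2 * cB m s + 4 * eS m s + sq,
     m * eS m s <= sumn s &
     [/\ dS m s <= 2 * cA m s, eS m s <= m * cB m s &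
     (dS m s = 0 -> eS m s = 0 -> all (fun x => (B m x == 3) || (B m x == 4)) s)]].
Proof.
move=> Hm; elim: s => [|x s IH] /=.
  move=> _; split => //; [exists 0; rewrite /eS /=; lia | by rewrite /eS /= muln0].

move=> /andP [/andP [/andP [HLx Hx0] Hxm] Hall].
have [IH1 IH2 [sq [Hsq IH3]] IH4 [IH5 IH6 IH7]] := IH Hall.
rewrite dS_cons eS_cons.
case: (leqP (B m x) 3) => Hx3.
  have Hn4 : (4 <= B m x) = false by lia.
  rewrite /=.
  have [H0 _ _ _ _] := B_props Hm (ltac:(lia) : 0 < x <= m ^ 2).
  split.
  - lia.
  - lia.
  - exists sq; split => //; nia.
  - lia.
  - split.
    + lia.
    + lia.
    + move=> Hd He; rewrite IH7 ?andbT; [|lia|lia].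
      apply/orP; left; apply/eqP; lia.
have Hn3 : (B m x <= 3) = false by lia.
rewrite /=.
have [Hb1 Hb2 Hb3] := elem_big Hm (ltac:(lia) : 0 < x <= m ^ 2) Hx3.
split.
- lia.
- lia.
- exists (sq + (B m x - 4) * (B m x - 4)); split; nia.
- lia.
- split.
  + lia.
  + lia.
  + move=> Hd He; rewrite IH7 ?andbT; [|lia|lia].
    apply/orP; right; apply/eqP; lia.
Qed.

Lemma odd_sumB m s : 0 < m -> all (fun x => (0 < x) && (x <= m ^ 2)) s ->
  odd (sumn (map (B m) s)) = odd (sumn s).
Proof.
move=> Hm; elim: s => //= x s IH /andP [/andP [H1 H2] Hall].
have [_ Hp _ _ _] := B_props Hm (ltac:(lia) : 0 < x <= m ^ 2).
by rewrite !oddD Hp IH.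
Qed.

Module ZA.
Unset Implicit Arguments.
Local Open Scope Z_scope.

Definition goodZ (n L : Z) : Prop :=
  exists w, 2 <= w <= n - 1 /\
    w * (L + 2) + (n - w) * (4 * (4 * n - 2 - w) - 2) <= (4 * n - 2 - w) ^ 2.

Definition XZ n a := a * (12 * n - 2 - 3 * a) - 10 * n + 8.
Definition YZ n w := w * (12 * n - 6 - 3 * w) - 6 * n + 4.

Lemma goodZ_Y n L w : 2 <= w <= n - 1 -> w * (L + 2) <= YZ n w -> goodZ n L.
Proof. intros H1 H2. exists w. split; [exact H1|]. unfold YZ in H2. nia. Qed.

Lemma small_good n L : 8 <= n -> L <= 10 * n - 16 -> goodZ n L.
Proof. intros. apply goodZ_Y with 3; unfold YZ; nia. Qed.

Lemma P_nonneg n a : 8 <= n -> a <= n - 1 -> 2 * n - 1 <= 3 * a -> ~ (n = 8 /\ a = 7) ->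
  0 <= n * (4 * a - 10) - 3 * a * a - a + 8.
Proof.
intros Hn Ha Ha2 Hne.
destruct (Z_le_gt_dec 8 a) as [H8|H8].
- assert (n * (4 * a - 10) >= (a + 1) * (4 * a - 10)) by nia. nia.
- assert (a = 5 \/ a = 6 \/ a = 7) as Hc by lia.
  destruct Hc as [H|[H|H]]; subst a; lia.
Qed.

Lemma O_good n a L : 8 <= n -> 1 <= a <= n - 1 -> 0 <= L -> a * L <= XZ n a -> goodZ n L.
Proof.
intros Hn Ha HL HX. unfold XZ in HX.
destruct (Z.eq_dec a 1) as [->|Ha1].
{ apply small_good; lia. }
destruct (Z_le_gt_dec (3 * a) (2 * n - 2)) as [Hs|Hs].
{ apply goodZ_Y with a; [lia|]. unfold YZ. nia. }
destruct (Z.eq_dec n 8) as [->|Hn8]; [destruct (Z.eq_dec a 7) as [->|Ha7]|].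
{ apply goodZ_Y with 5; [lia|]. unfold YZ. lia. }
{ apply goodZ_Y with (a - 1); [lia|].
  assert (HP := P_nonneg 8 a ltac:(lia) ltac:(lia) ltac:(lia) ltac:(lia)).
  assert (Hm : (a - 1) * (a * L) <= (a - 1) * (a * (12 * 8 - 2 - 3 * a) - 10 * 8 + 8)) by nia.
  apply (Z.mul_le_mono_pos_l _ _ a); [lia|]. unfold YZ. nia. }
{ apply goodZ_Y with (a - 1); [lia|].
  assert (HP := P_nonneg n a ltac:(lia) ltac:(lia) ltac:(lia) ltac:(lia)).
  assert (Hm : (a - 1) * (a * L) <= (a - 1) * (a * (12 * n - 2 - 3 * a) - 10 * n + 8)) by nia.
  apply (Z.mul_le_mono_pos_l _ _ a); [lia|]. unfold YZ. nia. }
Qed.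

Lemma phi_case n a b L x : 8 <= n -> 1 <= a -> a + b = n -> 1 <= b -> 0 <= x <= 4 * n - 1 - a ->
  10 * n - 15 <= L -> a * L <= x ^ 2 - b * (4 * x - 2) - (2 * x - 5) -> goodZ n L.
Proof.
intros Hn Ha Hab Hb Hx HL H.
destruct (Z_le_gt_dec x (4 * b + 2)) as [Hs|Hs].
- exfalso. assert (a * L <= 2 * b + 5) by nia. nia.
- apply O_good with a; try lia. unfold XZ.
  assert (Hc : x ^ 2 - b * (4 * x - 2) - (2 * x - 5) <=
     (4 * n - 1 - a) ^ 2 - b * (4 * (4 * n - 1 - a) - 2) - (2 * (4 * n - 1 - a) - 5)) by nia.
  subst n. nia.
Qed.

Lemma psi_case n a b L x : 8 <= n -> 1 <= a -> a + b = n -> 1 <= b -> 0 <= x <= 4 * n - 3 - a ->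
  10 * n - 15 <= L -> a * L <= x ^ 2 - b * (4 * x - 2) -> goodZ n L.
Proof.
intros Hn Ha Hab Hb Hx HL H.
destruct (Z_le_gt_dec x (4 * b)) as [Hs|Hs].
- exfalso. assert (a * L <= 2 * b) by nia. nia.
- apply O_good with a; try lia. unfold XZ.
  assert (Hc : x ^ 2 - b * (4 * x - 2) <=
     (4 * n - 3 - a) ^ 2 - b * (4 * (4 * n - 3 - a) - 2)) by nia.
  subst n. nia.
Qed.


Lemma main_arith n m L a b d e :
  8 <= n -> 0 <= a -> 0 <= b -> 0 <= d -> 0 <= e -> a + b = n -> 1 <= m -> 1 <= L ->
  m + 2 <= 3 * a - d + 4 * b + e ->
  a * L + b * (4 * m - 2) + (2 * m - 4) * e - e * e <= m * m ->
  e <= m -> d <= 2 * a -> e <= m * b -> n * L <= m * m ->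
  1 <= a -> 1 <= d + e -> goodZ n L.
Proof.
intros Hn Ha0 Hb0 Hd0 He0 Hab Hm HL HT HC HE Hd Heb HnL Ha Hbad.
destruct (Z_le_gt_dec L (10 * n - 16)) as [Hs|Hs].
{ apply small_good; lia. }
assert (Hm5 : 5 <= m).
{ destruct (Z_le_gt_dec m 4) as [H4|H4]; [|lia].
  assert (m * m <= 16) by nia.
  assert (8 * L <= n * L) by (apply Z.mul_le_mono_nonneg_r; lia). lia. }
destruct (Z.eq_dec e 0) as [He|He].
- subst e.
  destruct (Z.eq_dec b 0) as [Hb|Hb].
  + exfalso. subst b. assert (Hm3 : m <= 3 * n - 3) by lia.
    assert (H1 : m * m <= (3 * n - 3) * (3 * n - 3)) by (apply Z.mul_le_mono_nonneg; lia).
    assert (H2 : n * (10 * n - 15) <= n * L) by (apply Z.mul_le_mono_nonneg_l; lia).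
    nia.
  + apply psi_case with a b m; [lia|lia|lia|lia|lia|lia|].
    rewrite Z.pow_2_r. lia.
- assert (Hb1 : 1 <= b).
  { destruct (Z.eq_dec b 0) as [Hb|Hb]; [|lia]. subst b. rewrite Z.mul_0_r in Heb. lia. }
  destruct (Z_le_gt_dec (m + 2 - 4 * n + a + d) 1) as [Hz|Hz].
  + apply phi_case with a b m; [lia|lia|lia|lia|lia|lia|].
    assert (Hq : (e - 1) * (2 * m - 5 - e) >= 0).
    { apply Z.le_ge, Z.mul_nonneg_nonneg; lia. }
    rewrite Z.pow_2_r. lia.
  + apply phi_case with a b (4 * n - 1 - a - d); [lia|lia|lia|lia|lia|lia|].
    set (e0 := m + 2 - 4 * n + a + d) in *.
    assert (Hee : e0 <= e) by lia.
    assert (Hq : (e - e0) * (2 * m - 4 - e - e0) >= 0).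
    { apply Z.le_ge, Z.mul_nonneg_nonneg; lia. }
    assert (Hq3 : (b - 1) * (m - (4 * n - 1 - a - d)) >= 0).
    { apply Z.le_ge, Z.mul_nonneg_nonneg; lia. }
    unfold e0 in *. rewrite Z.pow_2_r. lia.
Qed.
Lemma big_first_false n m L a b d e :
  8 <= n -> 0 <= a -> 0 <= b -> 0 <= d -> 0 <= e -> a + b = n -> 1 <= m ->
  m + 2 <= 3 * a - d + 4 * b + e ->
  a * L + b * (4 * m - 2) + (2 * m - 4) * e - e * e <= m * m ->
  e <= m -> d <= 2 * a -> 4 * m - 3 <= L -> False.
Proof.
intros Hn Ha0 Hb0 Hd0 He0 Hab Hm HT HC HE Hd HL.
assert (H1 : a * (4 * m - 3) <= a * L) by (apply Z.mul_le_mono_nonneg_l; lia).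
assert (Hc : n * (4 * m - 3) + (2 * m - 4) * e - e * e <= m * m) by (subst n; lia).
destruct (Z_le_gt_dec m 4) as [H4|H4].
{ assert (Hn8 : 8 * (4 * m - 3) <= n * (4 * m - 3)) by (apply Z.mul_le_mono_nonneg_r; lia).
  assert (Hcase : m = 1 \/ m = 2 \/ m = 3 \/ m = 4) by lia.
  destruct Hcase as [H|[H|[H|H]]]; subst m; nia. }
assert (Hp : e * (2 * m - 4 - e) >= 0) by (apply Z.le_ge, Z.mul_nonneg_nonneg; lia).
assert (Hm4 : 4 * n <= m).
{ destruct (Z_le_gt_dec (4 * n) m) as [H|H]; [lia|].
  assert (Hq : (m - 1) * (4 * n - m - 1) >= 0) by (apply Z.le_ge, Z.mul_nonneg_nonneg; lia).
  lia. }
assert (Hee : m + 2 - 4 * n <= e) by lia.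
assert (Hq : (e - (m + 2 - 4 * n)) * (2 * m - 4 - e - (m + 2 - 4 * n)) >= 0).
{ apply Z.le_ge, Z.mul_nonneg_nonneg; lia. }
assert (Hq2 : (4 * n - 4) * (m - 4 * n) >= 0).
{ apply Z.le_ge, Z.mul_nonneg_nonneg; lia. }
lia.
Qed.
Lemma wit_Z (n w b m : Z) : 8 <= n -> 2 <= w -> b + w = n -> 1 <= b -> m + 2 = 4 * b + 3 * w ->
  w * (2 * m + 2) + 4 * b * m <= m * m + 2 * b /\ m * m + 2 * b <= 3 * m * w + 4 * b * m.
Proof.
intros Hn Hw Hb Hb1 Hm.
assert (E1 : m * m + 2 * m = 3 * m * w + 4 * m * b) by nia.
assert (H2 : (w - 2) * (m - 2) >= 0) by (apply Z.le_ge, Z.mul_nonneg_nonneg; lia).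
split; nia.
Qed.

End ZA.
Import ZA.
Set Implicit Arguments.

Lemma B_eq m l t : 0 < t -> t <= 2 * m + 2 -> B_cond m l t ->
  (forall y, 0 < y < t -> ~~ B_cond m l y) -> B m l = t.
Proof.
move=> Ht0 Ht Hc Hmin.
have [H1 H2 H3] := @first_filter (B_cond m l) (2 * m + 2) 1
  (ex_intro _ t (conj (ltac:(lia) : 1 <= t < 1 + (2 * m + 2)) Hc)).
rewrite -/(B m l) in H1 H2 H3.
case: (ltngtP (B m l) t) => // H.
  by move: (Hmin _ (ltac:(lia) : 0 < B m l < t)); rewrite H2.
by move: (H3 t (ltac:(lia))); rewrite Hc.
Qed.

Lemma path_tail a y z j : a <= y -> y <= z -> path leq a (nseq j y ++ [:: z]).
Proof.
elim: j a => [|j IH] a Ha Hy /=; first by rewrite andbT; lia.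
by rewrite Ha IH.
Qed.

Lemma path_all a x y z k j : a <= x -> x <= y -> y <= z ->
  path leq a (nseq k x ++ nseq j y ++ [:: z]).
Proof.
elim: k a => [|k IH] a Ha Hx Hy /=; first by apply: path_tail; lia.
by rewrite Ha IH.
Qed.

Lemma sorted_all x y z k j : x <= y -> y <= z ->
  sorted leq (nseq k x ++ nseq j y ++ [:: z]).
Proof.
case: k => [|k] Hx Hy /=.
  case: j => [|j] //=; by apply: path_tail.
by apply: path_all.
Qed.

Lemma witness n w b m L : 8 <= n -> 2 <= w -> b + w = n -> 1 <= b -> m + 2 + w = 4 * n ->
  w * (L + 2) + b * (4 * m) <= m * m + 2 * b ->
  exists s, [/\ sorted_forest n m s, impossibly_burnable m s & L < nth 0 s 0].
Proof.
move=> Hn Hw2 Hbw Hb1 Hm2' H0.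
have Hm2 : m + 2 = 4 * b + 3 * w by lia.
have [c Ec] : exists c, c + 2 = 4 * m by exists (4 * m - 2); lia.
have Hbc : b * c + 2 * b = b * (4 * m) by rewrite -Ec mulnDr; lia.
have H : w * (L + 2) + b * c <= m ^ 2 by rewrite -mulnn; lia.
have [N HNb] : exists N, N + b * c = m ^ 2 by exists (m ^ 2 - b * c); lia.
have [Wa Wb] := @wit_Z (Z.of_nat n) (Z.of_nat w) (Z.of_nat b) (Z.of_nat m)
   ltac:(lia) ltac:(lia) ltac:(lia) ltac:(lia) ltac:(lia).
have Hm : 3 * n - 1 <= m by lia.
have Hw0 : 0 < w by lia.
have HwN : w * (L + 2) <= N by lia.
have HNlo : w * (2 * m + 2) <= N by lia.
have HNhi : N <= (3 * m) * w by lia.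
clear Wa Wb.
set q := N %/ w.
have Hq1 : L + 2 <= q by rewrite /q leq_divRL // mulnC.
have Hq2 : 2 * m + 2 <= q by rewrite /q leq_divRL // mulnC.
have Hq3 : q * w <= N by exact: leq_divM.
have Hq4 : N < q.+1 * w by exact: ltn_ceil.
have Hq5 : q <= 3 * m by have := leq_div2r w HNhi; rewrite mulnK.
clearbody q.
have [Lw [HLwo HLw1 HLw2]] : exists Lw, [/\ odd Lw, q <= Lw + 1 & Lw <= q].
  case: (boolP (odd q)) => Ho; first by exists q; split => //; lia.
  exists q.-1; have Hq0 : 0 < q by lia.
  case: q Ho Hq0 {Hq1 Hq2 Hq3 Hq4 Hq5} => //= q' /negbNE Ho _; split => //; lia.
have Hp1 : w * Lw <= q * w by rewrite mulnC leq_mul2r HLw2 orbT.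
have Hp2 : q * w <= w * (Lw + 1) by rewrite mulnC leq_mul2l HLw1 orbT.
have [r Hr] : exists r, w * Lw + r = N by exists (N - w * Lw); lia.
have Hr2 : r < 2 * w by lia.
have Hreven : ~~ odd r.
  have HoN : odd N = odd w.
    have : odd (N + b * c) = odd (m ^ 2) by rewrite HNb.
    have Hoc : odd c = false.
      have : odd (c + 2) = odd (4 * m) by rewrite Ec.
      by rewrite oddD oddM /= addbF.
    rewrite oddD oddM Hoc andbF addbF oddX /= => ->.
    have : odd (m + 2) = odd (4 * b + 3 * w) by rewrite Hm2.
    by rewrite oddD addbF oddD oddM oddM /=.
  have : odd (w * Lw + r) = odd N by rewrite Hr.
  rewrite HoN oddD oddM HLwo andbT.
  by case: (odd w); case: (odd r).
exists (nseq w Lw ++ nseq b.-1 c ++ [:: c + r]).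
have HB3 : B m Lw = 3.
  apply: B_eq; [lia | lia | | ].
    rewrite /B_cond /= HLwo /=; lia.
  move=> y Hy; apply/negP; case/and3P => _ /eqP Hp Hi.
  have : y = 1 \/ y = 2 by lia.
  case => Ey; subst y; [lia | by move: Hp; rewrite HLwo].
have HB4 : forall x, ~~ odd x -> c <= x -> x + 16 <= 8 * m -> B m x = 4.
  move=> x Hx Hx1 Hx2; apply: B_eq; [lia | lia | | ].
    rewrite /B_cond /= (negbTE Hx) /=; lia.
  move=> y Hy; apply/negP; case/and3P => _ /eqP Hp Hi.
  have : y = 1 \/ y = 2 \/ y = 3 by lia.
  case => [Ey|[Ey|Ey]]; subst y; [by move: Hp; rewrite (negbTE Hx) | lia | by move: Hp; rewrite (negbTE Hx)].
have Hc_even : ~~ odd c.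
  have : odd (c + 2) = odd (4 * m) by rewrite Ec.
  by rewrite oddD oddM /= addbF => ->.
have HBc : B m c = 4 by apply: HB4 => //; lia.
have HBcr : B m (c + r) = 4.
  apply: HB4; [by rewrite oddD (negbTE Hc_even) (negbTE Hreven) | lia | lia].
split.
- split; last by apply: sorted_all; lia.
  split.
  + rewrite !size_cat !size_nseq /=; lia.
  + rewrite !all_cat !all_nseq /= andbT; apply/and3P; split; [apply/orP; right | apply/orP; right | ]; lia.
  + rewrite !sumn_cat !sumn_nseq /= -HNb -Hr.
    have : 0 < b by lia.
    case: (b) => // b' _ /=; nia.
- rewrite /impossibly_burnable !map_cat !sumn_cat /= !map_nseq !sumn_nseq HB3 HBc HBcr.
  have : 0 < b by lia.
  case: (b) Hm2 => // b' Hm2x _ /=; lia.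
- case: (w) Hw2 => [|w'] //= _; lia.
Qed.

Lemma sum_ge_size L s : all (fun x => L <= x) s -> size s * L <= sumn s.
Proof. elim: s => //= x s IH /andP [H1 H2]; have := IH H2; lia. Qed.

Lemma elem_le_sum s x : x \in s -> x <= sumn s.
Proof.
elim: s => //= y s IH; rewrite in_cons => /orP [/eqP ->|H]; first lia.
have := IH H; lia.
Qed.

Lemma parity_gap x m : m < x -> odd x = odd m -> m + 2 <= x.
Proof.
move=> H Ho; case: (ltngtP (m + 2) x) => // H2.
have E : x = m.+1 by lia.
by move: Ho; rewrite E /=; case: (odd m).
Qed.

Lemma first_big_L m L : 0 < m -> 0 < L <= m ^ 2 -> 4 <= B m L -> 4 * m - 3 <= L.
Proof.
move=> Hm HL H4.
have [_ _ _ Hle H3] := B_props Hm HL.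
have := H3 ltac:(lia).
have [u Hu] : exists u, B m L = u + 2 by exists (B m L - 2); lia.
rewrite Hu addnK => H.
have Hu2 : 2 <= u by lia.
have Hu3 : u + 2 <= m by lia.
have [k Hk] : exists k, m = u + 2 + k by exists (m - (u + 2)); lia.
subst m; nia.
Qed.

Theorem mainTheorem5 (n m : nat) (s : seq nat) :
  8 <= n ->
  sorted_forest n m s ->
  impossibly_burnable m s ->
  is_M n (nth 0 s 0) ->
  (forall i, i < n -> B m (nth 0 s i) = 3 \/ B m (nth 0 s i) = 4) /\
  odd (nth 0 s 0) /\ B m (nth 0 s 0) = 3.
Proof.
move=> Hn [[Hsize Hpos Hsum] Hsort] Hib [_ HM].
rewrite /impossibly_burnable in Hib.
case: s Hsize Hpos Hsum Hsort Hib HM => [|L s'] Hsize; first by rewrite -Hsize in Hn.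
set s := L :: s'.
move=> Hpos Hsum Hsort Hib HM /=.
have Hsz : size s = n by [].
have HallL : all (fun x => L <= x) s.
  rewrite /s /= leqnn /=; exact: (order_path_min leq_trans Hsort).
have Hle_m2 : forall x, x \in s -> 0 < x <= m ^ 2.
  move=> x Hx; rewrite -Hsum elem_le_sum // andbT; exact: (allP Hpos).
have HL : 0 < L <= m ^ 2 by apply: Hle_m2; rewrite mem_head.
have Hm : 0 < m by case: m HL {Hle_m2 Hsum Hib HM} => //= ; rewrite expnS mul0n; lia.
have Hall : all (fun x => (L <= x) && (0 < x) && (x <= m ^ 2)) s.
  apply/allP => x Hx; rewrite (allP HallL x Hx) /=; exact: Hle_m2.
have [A1 A2 [sq [Hsq A3]] A4 [A5 A6 A7]] := agg Hm Hall.
have Hpar : m + 2 <= sumn (map (B m) s).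
  apply: parity_gap => //; rewrite odd_sumB //; last first.
    apply/allP => x Hx; exact: Hle_m2.
  by rewrite Hsum oddX /=.
have HnL : n * L <= m ^ 2 by rewrite -Hsum -Hsz; exact: sum_ge_size.
have Hmm : m ^ 2 = m * m by rewrite mulnn.
rewrite Hmm in HnL Hsum.
have HeM : eS m s <= m.
  have : m * eS m s <= m * m by lia.
  by rewrite leq_pmul2l.
case: (leqP 4 (B m L)) => HB1.
  exfalso.
  have HL4 := first_big_L Hm HL HB1.
  apply: (@big_first_false (Z.of_nat n) (Z.of_nat m) (Z.of_nat L) (Z.of_nat (cA m s))
    (Z.of_nat (cB m s)) (Z.of_nat (dS m s)) (Z.of_nat (eS m s))); try lia.
have HB1' : B m L <= 3 by lia.
have Ha1 : 1 <= cA m s by rewrite /cA /s /= HB1'.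
case: (boolP ((dS m s == 0) && (eS m s == 0))) => Hgood.
  case/andP: Hgood => /eqP Hd /eqP He.
  have Hall34 := A7 Hd He.
  have HB3 : B m L = 3.
    case/orP: (allP Hall34 L (mem_head _ _)) => /eqP H3 //; lia.
  split; last split => //.
    move=> i Hi; have Hi' : i < size s by rewrite Hsz.
    move: (allP Hall34 (nth 0 s i) (mem_nth 0 Hi')).
    by case/orP => /eqP ->; [left|right].
  have [_ Hp _ _ _] := B_props Hm HL.
  by rewrite -Hp HB3.
exfalso.
have [w [Hw Hw2]] := @main_arith (Z.of_nat n) (Z.of_nat m) (Z.of_nat L) (Z.of_nat (cA m s))
    (Z.of_nat (cB m s)) (Z.of_nat (dS m s)) (Z.of_nat (eS m s))
    ltac:(lia) ltac:(lia) ltac:(lia) ltac:(lia) ltac:(lia) ltac:(lia) ltac:(lia) ltac:(lia)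
    ltac:(lia) ltac:(lia) ltac:(lia) ltac:(lia) ltac:(lia) ltac:(lia) ltac:(lia) ltac:(lia).
have [wn Ewn] : exists wn, Z.of_nat wn = w by exists (Z.to_nat w); lia.
have [bn Ebn] : exists bn, bn + wn = n by exists (n - wn); lia.
have [mn Emn] : exists mn, mn + 2 + wn = 4 * n by exists (4 * n - 2 - wn); lia.
have HZ : (Z.of_nat wn * (Z.of_nat L + 2) + Z.of_nat bn * (4 * Z.of_nat mn) <=
          Z.of_nat mn * Z.of_nat mn + 2 * Z.of_nat bn)%Z.
  have -> : Z.of_nat bn = (Z.of_nat n - w)%Z by lia.
  have -> : Z.of_nat mn = (4 * Z.of_nat n - 2 - w)%Z by lia.
  rewrite Ewn; lia.
have W1 : 2 <= wn by lia.
have W2 : 1 <= bn by lia.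
have W3 : wn * (L + 2) + bn * (4 * mn) <= mn * mn + 2 * bn by lia.
have [s2 [Hs2 Hib2 HL2]] := @witness n wn bn mn L Hn W1 Ebn W2 Emn W3.
have /= := HM mn s2 Hs2 Hib2; lia.
Qed.
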